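(* Let $K$ be a differential field of characteristic zero with a set $\Delta=\{\partial_1,\ldots,\partial_m\}$ of pairwise commuting derivations, let $R=K\{y_1,\ldots,y_n\}$, let $l\geqslant 0$, and let $J\subseteq R_l$ be an ideal. Let $p>0$ be an integer such that $(J')^p\subseteq J^{(1)}$. Then, for all integers $k\geqslant 0$, $$\sqrt{J'^{(k)}}\subseteq \sqrt{J^{(kp+1)}},$$ where the left radical is taken in $R_{l+k}$, the right radical in $R_{l+kp+1}$, and the inclusion is as subsets of $R$.
   Context: Let $\Theta=\{\partial_1^{i_1}\cdots\partial_m^{i_m} : i_j\geqslant 0\}$ and, for $\theta=\partial_1^{i_1}\cdots\partial_m^{i_m}$, let $\operatorname{ord}\theta=i_1+\cdots+i_m$. The ring of differential polynomials is $R=K\{y_1,\ldots,y_n\}=K[\theta y_i : \theta\in\Theta,\ 1\leqslant i\leqslant n]$ (a polynomial ring in the infinitely many variables $\theta y_i$, with the derivations extended by $\partial_j(\theta y_i)=(\partial_j\theta)y_i$), and for $h\geqslant 0$, $R_h=K[\theta y_i : 1\leqslant i\leqslant n,\ \operatorname{ord}\theta\leqslant h]$. For an ideal $J\subseteq R_l$ and $k\geqslant 0$, $J^{(k)}$ denotes the ideal of $R_{l+k}$ generated by $\{\theta g : g\in J,\ \theta\in\Theta,\ \operatorname{ord}\theta\leqslant k\}$. For an ideal $J\subseteq R_l$, $J'$ denotes $\sqrt{J^{(1)}}\cap R_l$, i.e. the radical in $R_{l+1}$ of the ideal generated by $\{\theta g: g\in J,\ \operatorname{ord}\theta\leqslant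 1\}$, intersected with $R_l$; $J'$ is an ideal of $R_l$, so $J'^{(k)}$ is an ideal of $R_{l+k}$. $(J')^p$ denotes the $p$-th power of the ideal $J'$. *)

(* Defs.v *)
From HB Require Import structures.
From mathcomp Require Import all_boot all_algebra.
From mathcomp Require Import finmap.
From mathcomp Require Import monalg.
Set Implicit Arguments. Unset Strict Implicit. Unset Printing Implicit Defensive.
Import GRing.Theory.
Local Open Scope ring_scope.

(* Variables  theta y_i : theta = d_1^{a_1}..d_m^{a_m} encoded by a : 'I_m -> nat. *)
Definition dvar (m n : nat) := ({ffun 'I_m -> nat} * 'I_n)%type.

(* R = K{y_1..y_n} : polynomial ring over K in the variables theta y_i. *)
Definition dpoly (K : fieldType) (m n : nat) := {malg K[cmonom (dvar m n)]}.

Definition yvar (K : fieldType) (m n : nat) (v : dvar m n) : dpoly K m n :=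
  mkmalgU (ucm v) 1.

Definition dconst (K : fieldType) (m n : nat) (c : K) : dpoly K m n := c%:MP.

Definition aord (m : nat) (a : {ffun 'I_m -> nat}) : nat := (\sum_(j < m) a j)%N.
Definition vord (m n : nat) (v : dvar m n) : nat := aord v.1.

Definition vshift (m n : nat) (j : 'I_m) (v : dvar m n) : dvar m n :=
  ([ffun k => (v.1 k + (k == j))%N], v.2).

Definition is_derivation (A : comRingType) (f : A -> A) : Prop :=
  (forall x y, f (x + y) = f x + f y) /\ (forall x y, f (x * y) = f x * y + x * f y).

Definition inR (K : fieldType) (m n : nat) (h : nat) (x : dpoly K m n) : Prop :=
  forall (mo : cmonom (dvar m n)), mo \in msupp x ->
    forall v : dvar m n, (mo v != 0)%N -> (vord v <= h)%N.

Definition is_ideal_in (K : fieldType) (m n : nat) (h : nat)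
  (J : dpoly K m n -> Prop) : Prop :=
  [/\ (forall x, J x -> inR h x), J 0,
      (forall x y, J x -> J y -> J (x + y)) &
      (forall r x, inR h r -> J x -> J (r * x))].

Definition gen_in (K : fieldType) (m n : nat) (h : nat)
  (S : dpoly K m n -> Prop) (x : dpoly K m n) : Prop :=
  exists (N : nat) (r g : 'I_N -> dpoly K m n),
    (forall i, inR h (r i) /\ S (g i)) /\ x = \sum_(i < N) r i * g i.

Definition rad_in (K : fieldType) (m n : nat) (h : nat)
  (I : dpoly K m n -> Prop) (x : dpoly K m n) : Prop :=
  inR h x /\ exists e : nat, I (x ^+ e).

Definition theta (K : fieldType) (m n : nat) (D : 'I_m -> dpoly K m n -> dpoly K m n)
  (a : {ffun 'I_m -> nat}) (g : dpoly K m n) : dpoly K m n :=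
  foldr (fun j x => iter (a j) (D j) x) g (enum 'I_m).

Definition Jk (K : fieldType) (m n : nat) (D : 'I_m -> dpoly K m n -> dpoly K m n)
  (l : nat) (J : dpoly K m n -> Prop) (k : nat) : dpoly K m n -> Prop :=
  gen_in (l + k)
    (fun x => exists g a, [/\ J g, (aord a <= k)%N & x = theta D a g]).

Definition Jprime (K : fieldType) (m n : nat) (D : 'I_m -> dpoly K m n -> dpoly K m n)
  (l : nat) (J : dpoly K m n -> Prop) : dpoly K m n -> Prop :=
  fun x => rad_in (l + 1) (Jk D l J 1) x /\ inR l x.

Definition ideal_pow (K : fieldType) (m n : nat) (h : nat)
  (I : dpoly K m n -> Prop) (p : nat) : dpoly K m n -> Prop :=
  gen_in h (fun x => exists g : 'I_p -> dpoly K m n,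
                       (forall i, I (g i)) /\ x = \prod_(i < p) g i).

(* Main.v *)
Require Import Defs.
From HB Require Import structures.
From mathcomp Require Import all_boot all_algebra.
From mathcomp Require Import finmap.
From mathcomp Require Import monalg.
From mathcomp Require Import zify.
Set Implicit Arguments. Unset Strict Implicit. Unset Printing Implicit Defensive.
Import GRing.Theory.
Local Open Scope ring_scope.

Definition aordA (m : nat) (a : {ffun 'I_m -> nat}) : nat := (\sum_(j < m) a j)%N.
Definition shiftf (m : nat) (j : 'I_m) (b : {ffun 'I_m -> nat}) : {ffun 'I_m -> nat} :=
  [ffun i => (b i + (i == j))%N].
Definition cnt (m : nat) (w : seq 'I_m) : {ffun 'I_m -> nat} := [ffun i => count_mem i w].
Definition vadd (m : nat) (a b : {ffun 'I_m -> nat}) : {ffun 'I_m -> nat} := [ffun i => (a i + b i)%N].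
Definition vscale (m : nat) (q : nat) (a : {ffun 'I_m -> nat}) : {ffun 'I_m -> nat} := [ffun i => (q * a i)%N].

Fixpoint leib (m : nat) (w : seq 'I_m) : seq (seq 'I_m * seq 'I_m) :=
  match w with
  | [::] => [:: ([::], [::])]
  | j :: w' => [seq (j :: uv.1, uv.2) | uv <- leib w'] ++ [seq (uv.1, j :: uv.2) | uv <- leib w']
  end.

Section Comb.
Variable m : nat.
Implicit Types (a b : {ffun 'I_m -> nat}) (w : seq 'I_m).

Lemma aord_shiftf j b : aordA (shiftf j b) = (aordA b).+1.
Proof.
rewrite /aordA /shiftf.
under eq_bigr => i _ do rewrite ffunE.
rewrite big_split /= -addn1; congr (_ + _)%N.
by rewrite (bigD1 j) //= eqxx big1 // => i /negbTE ->.
Qed.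

Lemma aord_vadd a b : aordA (vadd a b) = (aordA a + aordA b)%N.
Proof. by rewrite /aordA -big_split; apply: eq_bigr => i _; rewrite ffunE. Qed.

Lemma aord_vscale q a : aordA (vscale q a) = (q * aordA a)%N.
Proof. by rewrite /aordA big_distrr; apply: eq_bigr => i _; rewrite ffunE. Qed.

Lemma aord0 : aordA [ffun _ : 'I_m => 0%N] = 0%N.
Proof. by rewrite /aordA big1 // => i _; rewrite ffunE. Qed.

Lemma comp_le_aord a i : (a i <= aordA a)%N.
Proof. by rewrite /aordA (bigD1 i) //= leq_addr. Qed.

Lemma cnt_nil : cnt ([::] : seq 'I_m) = [ffun _ => 0%N].
Proof. by apply/ffunP => i; rewrite !ffunE. Qed.

Lemma cnt_cons j w : cnt (j :: w) = shiftf j (cnt w).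
Proof. by apply/ffunP => i; rewrite !ffunE /= addnC eq_sym. Qed.

Lemma aord_cnt w : aordA (cnt w) = size w.
Proof. by elim: w => [|j w IH]; rewrite ?cnt_nil ?aord0 // cnt_cons aord_shiftf IH. Qed.

Lemma leib_cnt w uv : uv \in leib w -> vadd (cnt uv.1) (cnt uv.2) = cnt w.
Proof.
elim: w uv => [|j w IH] [u v] /=; first by rewrite inE => /eqP [-> ->]; apply/ffunP => i; rewrite !ffunE.
rewrite mem_cat => /orP[] /mapP [[u' v'] /IH /= H [-> ->]]; rewrite !cnt_cons -H;
  apply/ffunP => i; rewrite !ffunE /=.
  by rewrite addnAC.
by rewrite addnA.
Qed.

Lemma leib_size w uv : uv \in leib w -> (size uv.1 <= size w)%N /\ (size uv.2 <= size w)%N.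
Proof.
move=> H; have := leib_cnt H => /(congr1 (@aordA m)).
by rewrite aord_vadd !aord_cnt => <-; rewrite leq_addr leq_addl.
Qed.

Lemma leib_exists w a : (forall i, a i <= cnt w i)%N ->
  exists2 uv, uv \in leib w & cnt uv.1 = a.
Proof.
elim: w a => [|j w IH] a Ha.
  exists ([::], [::]); first by rewrite inE.
  by apply/ffunP => i; have := Ha i; rewrite !ffunE /= leqn0 => /eqP ->.
case: (posnP (a j)) => Haj.
  have [uv H1 H2] : exists2 uv, uv \in leib w & cnt uv.1 = a.
    apply: IH => i; have := Ha i; rewrite cnt_cons ffunE.
    by case: (eqVneq i j) => [->|_]; rewrite ?Haj ?addn0.
  by exists (uv.1, j :: uv.2) => //=; rewrite mem_cat; apply/orP; right; apply: map_f.
pose a' := [ffun i => (a i - (i == j))%N].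
have Ea : a = shiftf j a'.
  apply/ffunP => i; rewrite !ffunE; case: (eqVneq i j) => [->|_]; last by rewrite !subn0 addn0.
  by rewrite subnK.
have [uv H1 H2] : exists2 uv, uv \in leib w & cnt uv.1 = a'.
  apply: IH => i; have := Ha i; rewrite cnt_cons !ffunE.
  case: (eqVneq i j) => [->|_]; last by rewrite !subn0 addn0.
  by rewrite addn1 subn1 => H; rewrite -ltnS prednK.
exists (j :: uv.1, uv.2) => /=; first by rewrite mem_cat; apply/orP; left; apply: map_f.
by rewrite cnt_cons H2 -Ea.
Qed.
End Comb.

Section Ord.
Variable m : nat.
Implicit Types (a b c : {ffun 'I_m -> nat}) (w : seq 'I_m).

Lemma exists_word b : exists w, cnt w = b.
Proof.
elim: {b}(aordA b).+1 {-2}b (ltnSn (aordA b)) => // N IH b Hb.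
case: (boolP [exists j, 0 < b j]%N) => [/existsP [j Hj]|].
  pose b' := [ffun i => (b i - (i == j))%N].
  have Eb : b = shiftf j b'.
    apply/ffunP => i; rewrite !ffunE; case: (eqVneq i j) => [->|_]; last by rewrite !subn0 addn0.
    by rewrite subnK.
  have [w Hw] : exists w, cnt w = b'.
    by apply: IH; move: Hb; rewrite Eb aord_shiftf.
  by exists (j :: w); rewrite cnt_cons Hw -Eb.
rewrite negb_exists => /forallP H; exists [::].
by apply/ffunP => i; rewrite !ffunE; have := H i; rewrite lt0n negbK => /eqP ->.
Qed.

Definition lexlt a b := [exists j : 'I_m, (a j < b j)%N && [forall i : 'I_m, (i < j)%N ==> (a i == b i)]].
Definition grlt a b := (aordA a < aordA b)%N || ((aordA a == aordA b) && lexlt a b).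
Definition grle a b := (a == b) || grlt a b.

Lemma lexlt_irr a : lexlt a a = false.
Proof. by apply/negbTE; rewrite negb_exists; apply/forallP => j; rewrite ltnn. Qed.

Lemma lexlt_trans a b c : lexlt a b -> lexlt b c -> lexlt a c.
Proof.
move=> /existsP [j1 /andP [H1 /forallP E1]] /existsP [j2 /andP [H2 /forallP E2]].
apply/existsP; case: (ltngtP j1 j2) => [Hlt|Hlt|Heq].
- exists j1; rewrite -(eqP (implyP (E2 j1) Hlt)) H1 /=.
  apply/forallP => i; apply/implyP => Hi.
  by rewrite (eqP (implyP (E1 i) Hi)) (implyP (E2 i) (ltn_trans Hi Hlt)).
- exists j2; rewrite (eqP (implyP (E1 j2) Hlt)) H2 /=.
  apply/forallP => i; apply/implyP => Hi.
  by rewrite (eqP (implyP (E1 i) (ltn_trans Hi Hlt))) (implyP (E2 i) Hi).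
- have Ej : j1 = j2 by apply: val_inj.
  subst j2; exists j1; rewrite (ltn_trans H1 H2) /=.
  apply/forallP => i; apply/implyP => Hi.
  by rewrite (eqP (implyP (E1 i) Hi)) (implyP (E2 i) Hi).
Qed.

Lemma lexlt_total a b : a != b -> lexlt a b || lexlt b a.
Proof.
move=> Hab.
have [i0 Hi0] : exists i0, a i0 != b i0.
  apply/existsP; apply: contraR Hab; rewrite negb_exists => /forallP H.
  by apply/eqP/ffunP => i; have := H i; rewrite negbK => /eqP.
case: (@arg_minnP _ i0 (fun i => a i != b i) (fun i : 'I_m => (i : nat)) Hi0) => j Hj Hmin.
have E : [forall i : 'I_m, (i < j)%N ==> (a i == b i)].
  apply/forallP => i; apply/implyP => Hi; apply: contraTT Hi => Hne.
  by rewrite -leqNgt; apply: Hmin.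
case: (ltngtP (a j) (b j)) => H.
- by apply/orP; left; apply/existsP; exists j; rewrite H E.
- apply/orP; right; apply/existsP; exists j; rewrite H /=.
  apply/forallP => i; apply/implyP => Hi; rewrite eq_sym; exact: (implyP (forallP E i) Hi).
- by rewrite H eqxx in Hj.
Qed.

Lemma lexlt_add a b c : lexlt (vadd a c) (vadd b c) = lexlt a b.
Proof.
rewrite /lexlt; apply: eq_existsb => j; rewrite !ffunE ltn_add2r; congr (_ && _).
by apply: eq_forallb => i; rewrite !ffunE eqn_add2r.
Qed.

Lemma grlt_irr a : grlt a a = false.
Proof. by rewrite /grlt ltnn eqxx lexlt_irr. Qed.

Lemma grlt_trans a b c : grlt a b -> grlt b c -> grlt a c.
Proof.
rewrite /grlt => /orP [H1|/andP [/eqP E1 L1]] /orP [H2|/andP [/eqP E2 L2]].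
- by rewrite (ltn_trans H1 H2).
- by rewrite -E2 H1.
- by rewrite E1 H2.
- by rewrite E1 E2 eqxx (lexlt_trans L1 L2) orbT.
Qed.

Lemma grlt_total a b : a != b -> grlt a b || grlt b a.
Proof.
move=> Hab; rewrite /grlt; case: (ltngtP (aordA a) (aordA b)) => //= E.
by rewrite ?E ?eqxx /=; apply: lexlt_total.
Qed.

Lemma grlt_aord a b : grlt a b -> (aordA a <= aordA b)%N.
Proof. by rewrite /grlt => /orP [/ltnW //|/andP [/eqP -> _]]. Qed.

Lemma grle_aord a b : grle a b -> (aordA a <= aordA b)%N.
Proof. by rewrite /grle => /orP [/eqP -> //|/grlt_aord]. Qed.

Lemma vaddC a b : vadd a b = vadd b a.
Proof. by apply/ffunP => i; rewrite !ffunE addnC. Qed.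

Lemma grlt_add a b c : grlt (vadd a c) (vadd b c) = grlt a b.
Proof. by rewrite /grlt !aord_vadd ltn_add2r eqn_add2r lexlt_add. Qed.

Lemma vadd_inj a b c : vadd a c = vadd b c -> a = b.
Proof. by move=> /ffunP H; apply/ffunP => i; have := H i; rewrite !ffunE => /addIn. Qed.

Lemma grle_add a b c : grle (vadd a c) (vadd b c) = grle a b.
Proof.
rewrite /grle grlt_add; congr (_ || _).
by apply/eqP/eqP => [/vadd_inj|->].
Qed.

Lemma grlt_le_trans a b c : grlt a b -> grle b c -> grlt a c.
Proof. by move=> H1 /orP [/eqP <-|H2] //; apply: grlt_trans H2. Qed.

Lemma grle_lt_trans a b c : grle a b -> grlt b c -> grlt a c.
Proof. by move=> /orP [/eqP ->|H1] H2 //; apply: grlt_trans H2. Qed.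

Lemma grlt_addlr a b c d : grlt a b -> grle c d -> grlt (vadd a c) (vadd b d).
Proof.
move=> H1 H2; apply: (@grlt_le_trans _ (vadd b c)); first by rewrite grlt_add.
by rewrite (vaddC b c) (vaddC b d) grle_add.
Qed.

Lemma ngrle a b : ~~ grle a b -> grlt b a.
Proof.
rewrite /grle negb_or => /andP [Hne Hlt].
by have := grlt_total Hne; rewrite (negbTE Hlt) /=.
Qed.

Lemma ngrlt a b : ~~ grlt a b -> grle b a.
Proof.
move=> H; rewrite /grle; case: (eqVneq b a) => //= Hne.
by have := grlt_total Hne; rewrite (negbTE H) orbF.
Qed.

Lemma vscaleS q a : vscale q.+1 a = vadd (vscale q a) a.
Proof. by apply/ffunP => i; rewrite !ffunE mulSn addnC. Qed.

Lemma grle_refl a : grle a a.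
Proof. by rewrite /grle eqxx. Qed.

Lemma key1 q al u v :
  grle (vadd u v) (vscale q.+1 al) -> ~~ grlt u al -> grle v (vscale q al).
Proof.
move=> Hw Hu; apply/negP => /negP /ngrle Hv.
have := grlt_addlr Hv (ngrlt Hu); rewrite -vscaleS vaddC => H.
by have := grlt_le_trans H Hw; rewrite grlt_irr.
Qed.

Lemma key2 q al u :
  grle (vadd u (vscale q al)) (vscale q.+1 al) -> ~~ grlt u al -> u = al.
Proof.
move=> Hw Hu; case: (eqVneq u al) => // Hne.
have H : grlt al u by have := grlt_total Hne; rewrite (negbTE Hu).
have := grlt_addlr H (grle_refl (vscale q al)).
rewrite -[vadd al _]vaddC -vscaleS => H2.
by have := grlt_le_trans H2 Hw; rewrite grlt_irr.
Qed.
End Ord.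


Definition thetaA (m : nat) (R : Type) (D : 'I_m -> R -> R) (a : {ffun 'I_m -> nat}) (g : R) : R :=
  foldr (fun j x => iter (a j) (D j) x) g (enum 'I_m).
Definition Fs (m : nat) (R : Type) (D : 'I_m -> R -> R) (s : seq 'I_m) (b : {ffun 'I_m -> nat}) (x : R) : R :=
  foldr (fun i y => iter (b i) (D i) y) x s.
Definition Dw (m : nat) (R : Type) (D : 'I_m -> R -> R) (w : seq 'I_m) (x : R) : R :=
  foldr (fun j y => D j y) x w.
Definition genA (R : ringType) (inRh : nat -> R -> Prop) (h : nat) (S : R -> Prop) (x : R) : Prop :=
  exists (N : nat) (r g : 'I_N -> R), (forall i, inRh h (r i) /\ S (g i)) /\ x = \sum_(i < N) r i * g i.

Definition radT (R : ringType) (inRh : nat -> R -> Prop) (H : nat) (T : R -> Prop) (z : R) : Prop :=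
  inRh H z /\ exists N, T (z ^+ N).
Definition JkA (m : nat) (R : ringType) (D : 'I_m -> R -> R) (inRh : nat -> R -> Prop)
  (l : nat) (J : R -> Prop) (s : nat) : R -> Prop :=
  genA inRh (l + s) (fun x => exists g a, [/\ J g, (aordA a <= s)%N & x = thetaA D a g]).
Definition radA (R : ringType) (inRh : nat -> R -> Prop) (h : nat) (I : R -> Prop) (x : R) : Prop :=
  inRh h x /\ exists e : nat, I (x ^+ e).
Definition JprimeA (m : nat) (R : ringType) (D : 'I_m -> R -> R) (inRh : nat -> R -> Prop)
  (l : nat) (J : R -> Prop) : R -> Prop :=
  fun x => radA inRh (l + 1) (JkA D inRh l J 1) x /\ inRh l x.
Definition powA (R : ringType) (inRh : nat -> R -> Prop) (h : nat) (I : R -> Prop) (p : nat) : R -> Prop :=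
  genA inRh h (fun x => exists g : 'I_p -> R, (forall i, I (g i)) /\ x = \prod_(i < p) g i).

Lemma count_lt (T : eqType) (a1 a2 : pred T) s x :
  (forall y, a1 y -> a2 y) -> x \in s -> a2 x -> ~~ a1 x -> (count a1 s < count a2 s)%N.
Proof.
move=> Hs; elim: s => [|y s IH] //=; rewrite inE => /orP [/eqP <-|Hx] H2 H1.
  rewrite H2 (negbTE H1) add0n add1n ltnS; exact: sub_count.
have := IH Hx H2 H1; case E1: (a1 y); first by rewrite (Hs _ E1).
by case: (a2 y) => /= H; lia.
Qed.

Section Abs.
Variables (m : nat) (R : comRingType) (inRh : nat -> R -> Prop) (D : 'I_m -> R -> R).
Hypotheses (HDD : forall j x y, D j (x + y) = D j x + D j y)
  (HDM : forall j x y, D j (x * y) = D j x * y + x * D j y)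
  (HDC : forall i j x, D i (D j x) = D j (D i x))
  (Hmono : forall h h' x, (h <= h')%N -> inRh h x -> inRh h' x)
  (H0 : forall h, inRh h 0) (H1 : forall h, inRh h 1)
  (HD : forall h x y, inRh h x -> inRh h y -> inRh h (x + y))
  (HN : forall h x, inRh h x -> inRh h (- x))
  (HM : forall h x y, inRh h x -> inRh h y -> inRh h (x * y))
  (HL : forall h j x, inRh h x -> inRh h.+1 (D j x)).

Lemma D0 j : D j 0 = 0.
Proof. have E := HDD j 0 0; rewrite addr0 in E; by apply: (addrI (D j 0)); rewrite addr0 -E. Qed.

Lemma D1 j : D j 1 = 0.
Proof. have E := HDM j 1 1; rewrite !mulr1 mul1r in E; by apply: (addrI (D j 1)); rewrite addr0 -E. Qed.

Lemma DN j x : D j (- x) = - D j x.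
Proof. by apply: (addrI (D j x)); rewrite -HDD !subrr D0. Qed.

Lemma DB j x y : D j (x - y) = D j x - D j y.
Proof. by rewrite HDD DN. Qed.

Lemma Dsum j (I : Type) (s : seq I) (F : I -> R) :
  D j (\sum_(i <- s) F i) = \sum_(i <- s) D j (F i).
Proof. elim: s => [|a s IH]; rewrite ?big_nil ?D0 // !big_cons HDD IH //. Qed.

Lemma inRB h x y : inRh h x -> inRh h y -> inRh h (x - y).
Proof. by move=> ? ?; apply: HD => //; apply: HN. Qed.

Lemma inRX h x e : inRh h x -> inRh h (x ^+ e).
Proof. by move=> Hx; elim: e => [|e IH]; rewrite ?expr0 ?exprS; [exact: H1|exact: HM]. Qed.

Lemma inRMn h x e : inRh h x -> inRh h (x *+ e).
Proof. by move=> Hx; elim: e => [|e IH]; rewrite ?mulr0n ?mulrS; [exact: H0|exact: HD]. Qed.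

Lemma iterD j i c y : D j (iter c (D i) y) = iter c (D i) (D j y).
Proof. by elim: c => [|c IH] //=; rewrite HDC IH. Qed.

Lemma Fs_D j (s : seq 'I_m) b x : D j (Fs D s b x) = Fs D s b (D j x).
Proof. by elim: s => [|i s IH] //=; rewrite iterD IH. Qed.

Lemma Fs_eq (s : seq 'I_m) (b1 b2 : {ffun 'I_m -> nat}) x : (forall i, i \in s -> b1 i = b2 i) -> Fs D s b1 x = Fs D s b2 x.
Proof.
elim: s => [|i s IH] //= Hb; rewrite Hb ?mem_head // IH // => i' Hi'.
by apply: Hb; rewrite inE Hi' orbT.
Qed.

Lemma Fs_shift j (s : seq 'I_m) b x : j \in s -> uniq s -> Fs D s (shiftf j b) x = Fs D s b (D j x).
Proof.
elim: s => [|i s IH] //= Hj /andP [Hi Hu].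
case: (eqVneq j i) => [E|Hne].
  subst i; rewrite ffunE eqxx addn1 iterSr.
  rewrite (@Fs_eq s (shiftf j b) b x); first by rewrite -Fs_D.
  move=> i' Hi'; rewrite ffunE; case: (eqVneq i' j) => [E|_]; last by rewrite addn0.
  by move: Hi; rewrite -E Hi'.
move: Hj; rewrite inE (negbTE Hne) /= => Hj.
have Hne' : i != j by rewrite eq_sym.
by rewrite ffunE (negbTE Hne') addn0 IH.
Qed.

Lemma theta_shift j b x : thetaA D (shiftf j b) x = D j (thetaA D b x).
Proof. by rewrite /thetaA -/(Fs D _ _ _) Fs_shift ?mem_enum ?enum_uniq // Fs_D. Qed.

Lemma theta0 x : thetaA D [ffun _ => 0%N] x = x.
Proof. by rewrite /thetaA; elim: (enum 'I_m) => [|i s IH] //=; rewrite ffunE IH. Qed.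

Lemma Dw_theta w x : Dw D w x = thetaA D (cnt w) x.
Proof. by elim: w => [|j w IH] /=; rewrite ?cnt_nil ?theta0 // cnt_cons theta_shift IH. Qed.

Lemma Dw_level h w x : inRh h x -> inRh (h + size w) (Dw D w x).
Proof. by move=> Hx; elim: w => [|j w IH] /=; rewrite ?addn0 // addnS; apply: HL. Qed.

Lemma theta_level h a x : inRh h x -> inRh (h + aordA a) (thetaA D a x).
Proof.
move=> Hx; have [w <-] := exists_word a.
by rewrite -Dw_theta aord_cnt; apply: Dw_level.
Qed.

Lemma DwD w x y : Dw D w (x + y) = Dw D w x + Dw D w y.
Proof. by elim: w => [|j w IH] //=; rewrite IH HDD. Qed.

Lemma Dw0 w : Dw D w 0 = 0.
Proof. by elim: w => [|j w IH] //=; rewrite IH D0. Qed.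

Lemma DwB w x y : Dw D w (x - y) = Dw D w x - Dw D w y.
Proof. by elim: w => [|j w IH] //=; rewrite IH DB. Qed.

Lemma Dw1 w : Dw D w 1 = if w is [::] then 1 else 0.
Proof. by elim: w => [|j w IH] //=; rewrite IH; case: w IH => [|? ?] _; rewrite ?D1 ?D0. Qed.

Lemma Dw_mul w x y : Dw D w (x * y) = \sum_(uv <- leib w) Dw D uv.1 x * Dw D uv.2 y.
Proof.
elim: w => [|j w IH] /=; first by rewrite big_cons big_nil addr0.
rewrite IH Dsum big_cat !big_map /= -big_split /=.
by apply: eq_bigr => uv _; rewrite HDM.
Qed.

Section Gen.
Variables (h : nat) (S : R -> Prop).
Local Notation G := (genA inRh h S).

Lemma genA0 : G 0.
Proof. by exists 0%N, (fun=> 0), (fun=> 0); split => [[]//|]; rewrite big_ord0. Qed.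

Lemma genA1 r g : inRh h r -> S g -> G (r * g).
Proof. by move=> Hr Hg; exists 1%N, (fun=> r), (fun=> g); split => //; rewrite big_ord1. Qed.

Lemma genAD x y : G x -> G y -> G (x + y).
Proof.
move=> [N1 [r1 [g1 [H1' ->]]]] [N2 [r2 [g2 [H2' ->]]]].
exists (N1 + N2)%N, (fun i => match split i with inl a => r1 a | inr b => r2 b end),
  (fun i => match split i with inl a => g1 a | inr b => g2 b end).
split; first by move=> i; case: split.
rewrite big_split_ord /=; congr (_ + _); apply: eq_bigr => i _.
  by rewrite -[lshift _ _]/(unsplit (inl i)) unsplitK.
by rewrite -[rshift _ _]/(unsplit (inr i)) unsplitK.
Qed.

Lemma genAM r x : inRh h r -> G x -> G (r * x).
Proof.
move=> Hr [N [r1 [g1 [H1' ->]]]].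
exists N, (fun i => r * r1 i), g1; split; first by move=> i; case: (H1' i) => ? ?; split => //; apply: HM.
by rewrite big_distrr; apply: eq_bigr => i _ /=; rewrite mulrA.
Qed.

Lemma genA_sum (I : Type) (s : seq I) (F : I -> R) : (forall i, G (F i)) -> G (\sum_(i <- s) F i).
Proof. by move=> HF; apply: (big_ind G) => //; [exact: genA0|exact: genAD]. Qed.
End Gen.

Lemma genA_mono h h' (S S' : R -> Prop) x : (h <= h')%N -> (forall y, S y -> S' y) ->
  genA inRh h S x -> genA inRh h' S' x.
Proof.
move=> Hh HS [N [r [g [Hrg ->]]]]; exists N, r, g; split => // i.
by case: (Hrg i) => ? ?; split; [exact: Hmono Hh _|exact: HS].
Qed.

Section Rad.
Variables (H : nat) (T : R -> Prop).
Hypotheses (T0 : T 0) (TD : forall x y, T x -> T y -> T (x + y))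
  (TM : forall r x, inRh H r -> T x -> T (r * x)).
Local Notation Q := (radT inRh H T).

Lemma QT z : inRh H z -> T z -> Q z.
Proof. by move=> Hz Tz; split => //; exists 1%N; rewrite expr1. Qed.

Lemma Q0 : Q 0.
Proof. exact: QT. Qed.

Lemma QM r x : inRh H r -> Q x -> Q (r * x).
Proof.
move=> Hr [Hx [N TN]]; split; first exact: HM.
by exists N; rewrite exprMn; apply: TM => //; apply: inRX.
Qed.

Lemma QD x y : Q x -> Q y -> Q (x + y).
Proof.
move=> [Hx [N TN]] [Hy [M TM']]; split; first exact: HD.
exists (N + M)%N; rewrite exprDn; apply: (big_ind T) => // i _ /=.
case: (leqP M i) => Hi.
  have -> : y ^+ i = y ^+ (i - M) * y ^+ M by rewrite -exprD subnK.
  by rewrite mulrA -mulrnAl; apply: TM => //; apply: inRMn; apply: HM; apply: inRX.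
have -> : x ^+ (N + M - i) = x ^+ (N + M - i - N) * x ^+ N by rewrite -exprD subnK // -addnBA ?leq_addr // ltnW.
by rewrite mulrAC -mulrnAl; apply: TM => //; apply: inRMn; apply: HM; apply: inRX.
Qed.

Lemma QN x : Q x -> Q (- x).
Proof. by move=> Hx; rewrite -mulN1r; apply: QM => //; apply: HN. Qed.

Lemma QB x y : Q x -> Q y -> Q (x - y).
Proof. by move=> ? ?; apply: QD => //; apply: QN. Qed.

Lemma Q_pow z e : Q (z ^+ e) -> inRh H z -> Q z.
Proof. by move=> [_ [N TN]] Hz; split => //; exists (e * N)%N; rewrite exprM. Qed.

Lemma Q_div z c (u : R) : Q (z *+ c) -> inRh 0 u -> u * c%:R = 1 -> inRh H z -> Q z.
Proof.
move=> Hzc Hu Hu1 Hz.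
have -> : z = u * (z *+ c) by rewrite -mulr_natr mulrA mulrAC Hu1 mul1r.
by apply: QM => //; apply: Hmono Hu.
Qed.

Lemma Msum (I : eqType) (s : seq I) (F : I -> R) (Z : R) (A : pred I) (B : Prop) :
  (forall uv, uv \in s -> exists c, Q (F uv - Z *+ c) /\ (A uv -> 0 < c)%N /\ ((0 < c)%N -> B)) ->
  exists c, Q (\sum_(uv <- s) F uv - Z *+ c) /\ ((exists2 uv, uv \in s & A uv) -> 0 < c)%N /\ ((0 < c)%N -> B).
Proof.
elim: s => [|x s IH] HF.
  exists 0%N; rewrite big_nil mulr0n subr0; split; first exact: Q0.
  by split => // [[uv]].
have [c1 [Q1 [P1 B1]]] := HF x (mem_head _ _).
have [c2 [Q2 [P2 B2]]] : exists c, Q (\sum_(uv <- s) F uv - Z *+ c) /\ ((exists2 uv, uv \in s & A uv) -> 0 < c)%N /\ ((0 < c)%N -> B).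
  by apply: IH => uv Huv; apply: HF; rewrite inE Huv orbT.
exists (c1 + c2)%N; split.
  by rewrite big_cons mulrnDr opprD addrACA; apply: QD.
split.
  move=> [uv]; rewrite inE => /orP [/eqP ->|Huv] HA; rewrite addn_gt0.
    by rewrite P1.
  by rewrite P2 ?orbT //; exists uv.
by rewrite addn_gt0 => /orP [/B1|/B2].
Qed.

Variables (al : {ffun 'I_m -> nat}) (a : R) (l p : nat).
Hypotheses (Ha : inRh l a) (HH : (l + p * aordA al <= H)%N) (HY : inRh H (thetaA D al a))
  (IHb : forall b, grlt b al -> Q (thetaA D b a)).

Lemma lev w z : (size w <= p * aordA al)%N -> inRh l z -> inRh H (Dw D w z).
Proof.
move=> Hw Hz; apply: (Hmono _ (Dw_level w Hz)).
by apply: leq_trans HH; rewrite leq_add2l.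
Qed.

Lemma grle_size q w : (q <= p)%N -> grle (cnt w) (vscale q al) -> (size w <= p * aordA al)%N.
Proof.
move=> Hq /grle_aord; rewrite aord_cnt aord_vscale => H'.
by apply: leq_trans H' _; rewrite leq_mul2r Hq orbT.
Qed.

Lemma Mlem q : (q <= p)%N -> forall w, grle (cnt w) (vscale q al) ->
  exists c, Q (Dw D w (a ^+ q) - thetaA D al a ^+ q *+ c) /\
    (cnt w = vscale q al -> 0 < c)%N /\ ((0 < c)%N -> cnt w = vscale q al).
Proof.
elim: q => [|q IHq] Hq w Hw.
  case: w Hw => [|j w'] Hw.
    exists 1%N; rewrite /= expr0 mulr1n subrr; split; first exact: Q0.
    by split => // _; apply/ffunP => i; rewrite !ffunE mul0n.
  exists 0%N; rewrite mulr0n subr0 expr0 (Dw1 (j :: w')); split; first exact: Q0.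
  split => // E; have := congr1 (@aordA m) E.
  by rewrite aord_cnt aord_vscale mul0n.
have Hq' : (q <= p)%N by apply: ltnW.
have Hsw := grle_size Hq Hw.
rewrite exprS Dw_mul.
have Hterms : forall uv, uv \in leib w -> exists c, Q (Dw D uv.1 a * Dw D uv.2 (a ^+ q) - thetaA D al a ^+ q.+1 *+ c) /\
   ((cnt uv.1 == al) && (cnt uv.2 == vscale q al) -> 0 < c)%N /\ ((0 < c)%N -> cnt w = vscale q.+1 al).
  move=> [u v] Huv /=.
  have Hc := leib_cnt Huv; have [Hsu Hsv] := leib_size Huv; simpl in Hc, Hsu, Hsv.
  have Lu : inRh H (Dw D u a) by apply: lev => //; apply: leq_trans Hsw.
  have Lv : inRh H (Dw D v (a ^+ q)) by apply: lev; [apply: leq_trans Hsw|apply: inRX].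
  case: (boolP (grlt (cnt u) al)) => Hu.
    exists 0%N; rewrite mulr0n subr0; split.
      by rewrite mulrC; apply: QM => //; rewrite Dw_theta; apply: IHb.
    split => //; move/andP => [/eqP E _]; by rewrite E grlt_irr in Hu.
  have Hv : grle (cnt v) (vscale q al) by apply: (key1 (u := cnt u)) => //; rewrite Hc.
  have [c' [HQ' [Hp' Hc']]] := IHq Hq' v Hv.
  case: (eqVneq (cnt v) (vscale q al)) => Ev.
    have Eu : cnt u = al by apply: (key2 (q := q)) => //; rewrite -Ev Hc.
    exists c'; split.
      have -> : Dw D u a * Dw D v (a ^+ q) - thetaA D al a ^+ q.+1 *+ c' =
                thetaA D al a * (Dw D v (a ^+ q) - thetaA D al a ^+ q *+ c').
        by rewrite Dw_theta Eu mulrBr exprS mulrnAr.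
      by apply: QM.
    split; first by move=> _; apply: Hp'.
    by move=> _; rewrite -Hc Eu Ev vscaleS vaddC.
  have Ec : c' = 0%N by case: (posnP c') => // /Hc' E; rewrite E eqxx in Ev.
  exists 0%N; rewrite mulr0n subr0; split.
    by apply: QM => //; move: HQ'; rewrite Ec mulr0n subr0.
  by split => //; case/andP.
have [c [HQ [P1 P2]]] := Msum Hterms.
exists c; split => //; split => // E; apply: P1.
  have [uv Huv Hu1] : exists2 uv, uv \in leib w & cnt uv.1 = al.
    by apply: leib_exists => i; rewrite E ffunE leq_pmull.
  exists uv => //; rewrite Hu1 eqxx /=; apply/eqP.
  by have := leib_cnt Huv; rewrite Hu1 E vscaleS (vaddC al) => /vadd_inj.
Qed.
End Rad.

Section JK.
Variables (l : nat) (J : R -> Prop).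
Hypothesis (HJ : forall g, J g -> inRh l g).

Lemma JkA_inR s x : JkA D inRh l J s x -> inRh (l + s) x.
Proof.
move=> [N [r [g [Hrg ->]]]]; apply: (big_ind (inRh (l + s))) => //; [exact: HD|] => i _.
case: (Hrg i) => Hr [g0 [a0 [Jg Ha0 ->]]]; apply: HM => //.
by apply: (Hmono _ (theta_level a0 (HJ Jg))); rewrite leq_add2l.
Qed.

Lemma JkA_mono s s' x : (s <= s')%N -> JkA D inRh l J s x -> JkA D inRh l J s' x.
Proof.
move=> Hs; apply: genA_mono; first by rewrite leq_add2l.
by move=> y [g [a0 [Jg Ha0 ->]]]; exists g, a0; split => //; apply: leq_trans Hs.
Qed.

Lemma JkA_D s j x : JkA D inRh l J s x -> JkA D inRh l J s.+1 (D j x).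
Proof.
move=> [N [r [g [Hrg ->]]]]; rewrite Dsum; apply: genA_sum => i; rewrite HDM.
case: (Hrg i) => Hr [g0 [a0 [Jg Ha0 Eg]]].
apply: genAD; apply: genA1.
- by rewrite addnS; apply: HL.
- by exists g0, a0; split => //; apply: leq_trans Ha0 _.
- by apply: Hmono Hr; rewrite leq_add2l.
- by exists g0, (shiftf j a0); rewrite aord_shiftf Eg theta_shift; split.
Qed.

Lemma JkA_Dw s w x : JkA D inRh l J s x -> JkA D inRh l J (s + size w) (Dw D w x).
Proof. by move=> Hx; elim: w => [|j w IH] /=; rewrite ?addn0 // addnS; apply: JkA_D. Qed.
End JK.

Hypothesis Hinv : forall c : nat, (0 < c)%N -> exists u, inRh 0 u /\ u * c%:R = 1.

Theorem main_abs (l : nat) (J : R -> Prop) (HJ : forall g, J g -> inRh l g)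
  (p : nat) (Hp : (0 < p)%N)
  (Hpow : forall x, powA inRh l (JprimeA D inRh l J) p x -> JkA D inRh l J 1 x)
  (k : nat) :
  forall x, radA inRh (l + k) (JkA D inRh l (JprimeA D inRh l J) k) x ->
    radA inRh (l + k * p + 1) (JkA D inRh l J (k * p + 1)) x.
Proof.
pose H := (l + (k * p + 1))%N.
pose T := JkA D inRh l J (k * p + 1).
have T0 : T 0 by apply: genA0.
have TD : forall x y, T x -> T y -> T (x + y) by move=> x y; apply: genAD.
have TM : forall r x, inRh H r -> T x -> T (r * x) by move=> r x; apply: genAM.
have Hkp : (k <= k * p)%N by apply: leq_pmulr.
have Main : forall a, JprimeA D inRh l J a -> forall al, (aordA al <= k)%N -> radT inRh H T (thetaA D al a).
  move=> a Ja al Hal; have Ha : inRh l a by case: Ja.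
  pose L := map (fun t : {ffun 'I_m -> 'I_k.+1} => [ffun i => (t i : nat)]) (enum {ffun 'I_m -> 'I_k.+1}).
  have inL : forall b, (aordA b <= k)%N -> b \in L.
    move=> b Hb; apply/mapP; exists [ffun i => inord (b i)]; first by rewrite mem_enum.
    apply/ffunP => i; rewrite !ffunE inordK // ltnS; apply: leq_trans Hb; exact: comp_le_aord.
  pose rank b := count (fun c => grlt c b) L.
  suff : forall N b, (rank b < N)%N -> (aordA b <= k)%N -> radT inRh H T (thetaA D b a).
    by move=> /(_ (rank al).+1 al (ltnSn _) Hal).
  elim => // N IHN b Hr Hb.
  have IHb : forall c, grlt c b -> radT inRh H T (thetaA D c a).
    move=> c Hc; have Hcb := grlt_aord Hc.
    apply: IHN; last by apply: leq_trans Hb.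
    have Hr' : (rank b <= N)%N by rewrite -ltnS.
    apply: leq_trans Hr'; apply: (count_lt (x := c)).
    - by move=> y Hy; apply: grlt_trans Hy Hc.
    - by apply: inL; apply: leq_trans Hb.
    - exact: Hc.
    - by rewrite grlt_irr.
  have HH : (l + p * aordA b <= H)%N.
    rewrite /H leq_add2l; apply: leq_trans (leq_addr 1 _); by rewrite mulnC leq_mul2r Hb orbT.
  have HY : inRh H (thetaA D b a).
    apply: (Hmono _ (theta_level b Ha)); rewrite /H leq_add2l.
    by apply: leq_trans (leq_trans Hkp (leq_addr _ _)).
  have [w0 Hw0] := exists_word (vscale p b).
  have [c [HQ [Hc1 _]]] := @Mlem H T T0 TD TM b a l p Ha HH HY IHb p (leqnn p) w0 (introT orP (or_introl (introT eqP Hw0))).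
  have Hc := Hc1 Hw0.
  have Hsz : size w0 = (p * aordA b)%N by rewrite -aord_cnt Hw0 aord_vscale.
  have TDw : T (Dw D w0 (a ^+ p)).
    apply: (JkA_mono (s := (1 + size w0)%N)).
      by rewrite Hsz addnC leq_add2r mulnC leq_mul2r Hb orbT.
    apply: JkA_Dw; apply: Hpow.
    have -> : a ^+ p = 1 * a ^+ p by rewrite mul1r.
    apply: genA1; first exact: H1.
    exists (fun=> a); split; first by move=> _.
    have Hprod : forall q, \prod_(i < q) a = a ^+ q.
      by elim => [|q IH]; rewrite ?big_ord0 ?expr0 // big_ord_recr IH exprSr.
    by rewrite Hprod.
  have QDw : radT inRh H T (Dw D w0 (a ^+ p)).
    apply: QT => //; rewrite /H -[(_ + _)%N]/(l + (k * p + 1))%N.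
    exact: (JkA_inR HJ TDw).
  have Q1 := QB T0 TD TM QDw HQ.
  rewrite opprB addrC subrK in Q1.
  have [u [Hu Hu1]] := Hinv Hc.
  have Q2 := Q_div TM Q1 Hu Hu1 (inRX p HY).
  exact: (Q_pow Q2 HY).
move=> x [Hx [e [N [r [g [Hrg Ex]]]]]].
have Qx : radT inRh H T (x ^+ e).
  rewrite Ex; apply: (big_ind (radT inRh H T)); [by apply: Q0 | by move=> ? ? ? ?; apply: QD | ] => i _.
  case: (Hrg i) => Hr [g0 [a0 [Jg Ha0 ->]]].
  apply: QM => //; first by apply: Hmono Hr; rewrite /H leq_add2l; apply: leq_trans (leq_addr _ _).
  exact: Main.
case: Qx => _ [N' TN']; split.
  by apply: Hmono Hx; rewrite -addnA leq_add2l; apply: leq_trans (leq_addr _ _).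
by exists (e * N')%N; rewrite exprM.
Qed.
End Abs.


Section InR.
Variables (K : fieldType) (m n : nat).
Local Notation R := (dpoly K m n).

Lemma inR_mono h h' (x : R) : (h <= h')%N -> inR h x -> inR h' x.
Proof. by move=> hh Hx mo Hmo v Hv; apply: leq_trans (Hx mo Hmo v Hv) hh. Qed.

Lemma inR0 h : inR h (0 : R).
Proof. by move=> mo; rewrite msupp0 in_fset0. Qed.

Lemma inRD h (x y : R) : inR h x -> inR h y -> inR h (x + y).
Proof.
move=> Hx Hy mo /(fsubsetP (msuppD_le x y)); rewrite in_fsetU => /orP[]; [exact: Hx|exact: Hy].
Qed.

Lemma inRN h (x : R) : inR h x -> inR h (- x).
Proof. by move=> Hx mo; rewrite msuppN; exact: Hx. Qed.

Lemma inRM h (x y : R) : inR h x -> inR h y -> inR h (x * y).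
Proof.
move=> Hx Hy mo /msuppM_le [k1 [k2 [H1 H2 ->]]] v.
rewrite cmM; case E1: (k1 v == 0%N).
  by rewrite (eqP E1) add0n; exact: Hy.
by move=> _; apply: (Hx k1 H1 v); rewrite E1.
Qed.

Lemma inRC h (c : K) : inR h (dconst m n c).
Proof.
move=> mo /(fsubsetP (msuppC_le c)); rewrite in_fset1 => /eqP -> v.
by rewrite cm1.
Qed.

Lemma inR1 h : inR h (1 : R).
Proof. by rewrite -mpolyC1E; exact: inRC. Qed.

Lemma cinRX h (x : R) e : inR h x -> inR h (x ^+ e).
Proof. by move=> Hx; elim: e => [|e IH]; rewrite ?expr0 ?exprS; [exact: inR1|exact: inRM]. Qed.

Lemma cinRMn h (x : R) e : inR h x -> inR h (x *+ e).
Proof. by move=> Hx mo /(fsubsetP (msuppMn_le x e)); exact: Hx. Qed.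

Lemma inR_sum h (I : Type) (s : seq I) (F : I -> R) :
  (forall i, inR h (F i)) -> inR h (\sum_(i <- s) F i).
Proof.
move=> HF; apply: (big_ind (inR h)) => //; [exact: inR0|exact: inRD].
Qed.

Lemma inRy h (v : dvar m n) : (vord v <= h)%N -> inR h (yvar K v).
Proof.
move=> Hv mo /(fsubsetP msuppU_le); rewrite in_fset1 => /eqP -> w.
by rewrite cmU; case: (v =P w) => [<-|].

Qed.

Lemma malgU_C (c : K) (mo : cmonom (dvar m n)) :
  << c *g mo >> = dconst m n c * (<< mo >> : R).
Proof.
by rewrite /dconst malgM_def fgmulUU mulr1 mul1m.
Qed.

Lemma poly_ind h (P : R -> Prop) :
  (forall c, P (dconst m n c)) ->
  (forall v, (vord v <= h)%N -> P (yvar K v)) ->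
  (forall x y, P x -> P y -> P (x + y)) ->
  (forall x y, P x -> P y -> P (x * y)) ->
  forall x, inR h x -> P x.
Proof.
move=> HC HY HD HM.
have HU : forall mo : cmonom (dvar m n),
   (forall v, mo v != 0%N -> (vord v <= h)%N) -> P << mo >>.
  move=> mo; elim: {mo}(mdeg mo).+1 {-2}mo (ltnSn (mdeg mo)) => // N IH mo.
  rewrite ltnS => Hdeg Hmo.
  have [/eqP|Hne] := eqVneq (mdeg mo) 0%N.
    by rewrite mdeg_eq0 => /eqP ->; exact: HC.
  have : finsupp mo != fset0.
    by apply: contra Hne => /eqP E; rewrite mdegE E big_seq_fset0.
  case/fset0Pn => v; rewrite -cmE_neq0 => Hv.
  have Emo : mo = (mmul (ucm v) (divcm mo (ucm v))).
    apply/eqP/cmP => i; rewrite cmM divcmE cmU.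
    case: eqP => [<-|_]; last by rewrite subn0.
    by rewrite add1n subn1 prednK // lt0n.
  rewrite Emo.
  have -> : (<< (mmul (ucm v) (divcm mo (ucm v))) >> : R) = yvar K v * << divcm mo (ucm v) >>.
    by rewrite /yvar malgM_def fgmulUU mulr1.
  apply: HM; first by apply: HY; apply: Hmo.
  apply: IH; last by move=> w; rewrite divcmE => Hw; apply: Hmo; apply: contra Hw => /eqP ->.
  move: Hdeg; rewrite {1}Emo mdegM mdegU add1n.
  by move=> H; apply: leq_trans H.
move=> x Hx; rewrite (monalgE x) big_seq.
apply: (big_ind P); first by rewrite -malgC0E; exact: HC.
  exact: HD.
move=> mo Hmo; rewrite malgU_C; apply: HM; first exact: HC.
by apply: HU => v; apply: Hx.
Qed.

Lemma inR_ex (x : R) : exists h, inR h x.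
Proof.
exists (\max_(mo <- msupp x) \max_(v <- finsupp mo) vord v)%N.
move=> mo Hmo v Hv.
have H1 := @leq_bigmax_seq _ (enum_fset (msupp x)) xpredT (fun mo : cmonom (dvar m n) => \max_(v <- finsupp mo) vord v) mo Hmo isT.
apply: leq_trans H1.
by apply: leq_bigmax_seq => //; rewrite -cmE_neq0.
Qed.
End InR.

Lemma comm_add_abs (R : comRingType) (Di Dj : R -> R)
  (HDi : forall x y, Di (x + y) = Di x + Di y) (HDj : forall x y, Dj (x + y) = Dj x + Dj y) x y :
  Di (Dj x) = Dj (Di x) -> Di (Dj y) = Dj (Di y) -> Di (Dj (x + y)) = Dj (Di (x + y)).
Proof. by move=> H1 H2; rewrite !HDi !HDj !HDi H1 H2. Qed.

Lemma comm_mul_abs (R : comRingType) (Di Dj : R -> R)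
  (HDi : forall x y, Di (x + y) = Di x + Di y) (HDj : forall x y, Dj (x + y) = Dj x + Dj y)
  (HMi : forall x y, Di (x * y) = Di x * y + x * Di y) (HMj : forall x y, Dj (x * y) = Dj x * y + x * Dj y) x y :
  Di (Dj x) = Dj (Di x) -> Di (Dj y) = Dj (Di y) -> Di (Dj (x * y)) = Dj (Di (x * y)).
Proof.
move=> H1 H2; rewrite HMj HMi !HDi !HDj !HMi !HMj H1 H2.
by rewrite -!addrA; congr (_ + _); rewrite !addrA; congr (_ + _); rewrite addrC.
Qed.

Section Der.
Variables (K : fieldType) (m n : nat).
Local Notation R := (dpoly K m n).
Variables (d : 'I_m -> K -> K)
  (Hcomm : forall i j (x : K), d i (d j x) = d j (d i x))
  (D : 'I_m -> R -> R)
  (HDder : forall j, is_derivation (D j))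
  (HDc : forall j (c : K), D j (dconst m n c) = dconst m n (d j c))
  (HDy : forall j (v : dvar m n), D j (yvar K v) = yvar K (vshift j v)).

Lemma cDD j x y : D j (x + y) = D j x + D j y. Proof. by case: (HDder j). Qed.
Lemma cDM j x y : D j (x * y) = D j x * y + x * D j y. Proof. by case: (HDder j). Qed.

Lemma vord_shift j (v : dvar m n) : vord (vshift j v) = (vord v).+1.
Proof. exact: aord_shiftf. Qed.

Lemma D_level h j x : inR h x -> inR h.+1 (D j x).
Proof.
move=> Hx.
suff : inR h x /\ inR h.+1 (D j x) by case.
move: x Hx; apply: (poly_ind (h := h)).
- by move=> c; split; [exact: inRC|rewrite HDc; exact: inRC].
- move=> v Hv; split; first exact: inRy.
  by rewrite HDy; apply: inRy; rewrite vord_shift.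
- move=> x y [H1 H2] [H3 H4]; split; first exact: inRD.
  by rewrite cDD; apply: inRD.
- move=> x y [H1 H2] [H3 H4]; split; first exact: inRM.
  rewrite cDM; apply: inRD; apply: inRM => //; apply: inR_mono H1 || apply: inR_mono H3; exact: leqnSn.
Qed.

Lemma vshiftC i j (v : dvar m n) : vshift i (vshift j v) = vshift j (vshift i v).
Proof.
rewrite /vshift /=; congr (_, _); apply/ffunP => k; rewrite !ffunE /=.
by rewrite -!addnA (addnC (k == j)).
Qed.

Lemma cDcomm i j x : D i (D j x) = D j (D i x).
Proof.
have [h Hx] := inR_ex x. move: x Hx.
apply: (@poly_ind K m n h (fun x => D i (D j x) = D j (D i x))).
- move=> c.
  exact: (etrans (congr1 (D i) (HDc j c)) (etrans (HDc i (d j c))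
    (etrans (congr1 (dconst m n) (Hcomm i j c))
     (esym (etrans (congr1 (D j) (HDc i c)) (HDc j (d i c))))))).
- move=> v _.
  exact: (etrans (congr1 (D i) (HDy j v)) (etrans (HDy i (vshift j v))
    (etrans (congr1 (@yvar K m n) (vshiftC i j v))
     (esym (etrans (congr1 (D j) (HDy i v)) (HDy j (vshift i v))))))).
- by move=> x y; apply: (comm_add_abs (cDD i) (cDD j)).
- by move=> x y; apply: (comm_mul_abs (cDD i) (cDD j) (cDM i) (cDM j)).
Qed.
End Der.

Lemma Hinv_conc (K : fieldType) (m n : nat) (Hchar : [pchar K] =i pred0) (c : nat) :
  (0 < c)%N -> exists u : dpoly K m n, inR 0 u /\ u * c%:R = 1.
Proof.
move=> Hc; exists (dconst m n (c%:R^-1)); split; first exact: inRC.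
have Hc0 : (c%:R : K) != 0 by move/pcharf0P: Hchar => ->; rewrite -lt0n.
by rewrite /dconst -mpolyC_nat -mpolyCM mulVf.
Qed.

Theorem lemma3p1 (K : fieldType) (m n : nat)
  (d : 'I_m -> K -> K)
  (Hchar : [pchar K] =i pred0)
  (Hd : forall j, is_derivation (d j))
  (Hcomm : forall i j (x : K), d i (d j x) = d j (d i x))
  (D : 'I_m -> dpoly K m n -> dpoly K m n)
  (HDder : forall j, is_derivation (D j))
  (HDc : forall j (c : K), D j (dconst m n c) = dconst m n (d j c))
  (HDy : forall j (v : dvar m n), D j (yvar K v) = yvar K (vshift j v))
  (l : nat) (J : dpoly K m n -> Prop) (HJ : is_ideal_in l J)
  (p : nat) (Hp : (0 < p)%N)
  (Hpow : forall x, ideal_pow l (Jprime D l J) p x -> Jk D l J 1 x)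
  (k : nat) :
  forall x : dpoly K m n,
    rad_in (l + k) (Jk D l (Jprime D l J) k) x ->
    rad_in (l + k * p + 1) (Jk D l J (k * p + 1)) x.
Proof.
move=> x Hx.
have HJ' : forall g, J g -> inR l g by case: HJ.
exact: (@main_abs m (dpoly K m n) (@inR K m n) D (cDD HDder) (cDM HDder)
  (cDcomm Hcomm HDder HDc HDy) (@inR_mono K m n) (@inR0 K m n) (@inR1 K m n)
  (@inRD K m n) (@inRN K m n) (@inRM K m n)
  (fun h j x => @D_level K m n d D HDder HDc HDy h j x)
  (@Hinv_conc K m n Hchar) l J HJ' p Hp Hpow k x Hx).
Qed.
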